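(* Let $n\ge0$. The space $\mathrm C^n(K,\mathcal D)^S$ is nontrivial (different from $\{0\}$) if and only if there exist an $n$-simplex $y\in\Sigma_n(K)$ and a nonzero function $f_0\in\mathcal D_{|y|}$ such that $f_0\circ s^{-1}=f_0$ for every $s$ in the stabilizer $S_y=\{s\in S:s(y)=y\}$.
   Context: $X$ is a spacetime, $S$ a group of conformal diffeomorphisms of $X$, and $K$ a base of the topology of $X$ consisting of open relatively compact subsets, globally invariant under $S$ ($s(o)\in K$ for $o\in K$, $s\in S$), ordered by inclusion. Simplices: $\Sigma_0(K)=K$; for $n\ge1$ an $n$-simplex is $x=(|x|;\partial_0x,\dots,\partial_nx)$ with $|x|\in K$, $\partial_ix\in\Sigma_{n-1}(K)$, $|\partial_ix|\subseteq|x|$ (for $n=1$, $|\partial_ix|=\partial_ix$), and, for $n\ge2$, $\partial_i\partial_jx=\partial_j\partial_{i+1}x$ for $i\ge j$. $S$ acts on simplices by applying $s$ to the support and recursively to the faces. $\mathcal D(X)$ is the space of real-valued compactly supported smooth functions on $X$ and, for $a\in K$, $\mathcal D_a$ is the subspace of functions vanishing outside the closure of $a$. $\mathrm C^n(K,\mathcal D)$ is the vector space of maps $f:\Sigma_n(K)\ni x\mapsto f_x\in\mathcal D_{|x|}$, with $S$-action $(sf)_x:=f_{s(x)}\circ s$, and $\mathrm C^n(K,\mathcal D)^S=\{f:(sf)_x=f_x\ \forall x,\ \forall s\in S\}$. *)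

(* Defs.v *)
From HB Require Import structures.
From mathcomp Require Import all_boot all_order all_algebra.
From mathcomp Require Import all_classical all_reals all_analysis.
Set Implicit Arguments. Unset Strict Implicit. Unset Printing Implicit Defensive.
Import Order.TTheory GRing.Theory Num.Theory.
Import numFieldNormedType.Exports.
Local Open Scope classical_set_scope.
Local Open Scope ring_scope.

Inductive simplex (T : Type) : Type :=
  Simp : set T -> seq (simplex T) -> simplex T.

Definition supp {T} (x : simplex T) : set T := let: Simp a _ := x in a.
Definition faces {T} (x : simplex T) : seq (simplex T) := let: Simp _ l := x in l.
Definition face {T} (i : nat) (x : simplex T) : simplex T :=
  nth (Simp set0 [::]) (faces x) i.

(* x \in Sigma_n(K).  A 0-simplex o \in K is represented as Simp o [::]. *)
Fixpoint is_simplex {T} (K : set (set T)) (n : nat) (x : simplex T) : Prop :=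
  match n with
  | 0 => K (supp x) /\ faces x = [::]
  | m.+1 =>
      [/\ K (supp x), size (faces x) = m.+2,
          (forall i, (i <= m.+1)%N ->
             is_simplex K m (face i x) /\ supp (face i x) `<=` supp x)
        & (forall i j, (0 < m)%N -> (j <= i)%N -> (i <= m)%N ->
             face i (face j x) = face j (face i.+1 x))]
  end.

Fixpoint sact {T} (s : T -> T) (x : simplex T) : simplex T :=
  match x with Simp a l => Simp (s @` a) (map (sact s) l) end.

(* S is a group of homeomorphisms of X (abstracting "conformal diffeomorphisms") *)
Definition homeo_group {X : topologicalType} (S : set (X -> X)) : Prop :=
  [/\ S id,
      (forall s t, S s -> S t -> S (s \o t)),
      (forall s, S s -> exists2 t, S t & cancel s t /\ cancel t s)
    & (forall s, S s -> continuous s)].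

Definition invariant_base {X : topologicalType} (S : set (X -> X))
    (K : set (set X)) : Prop :=
  [/\ (forall o, K o -> open o /\ compact (closure o)),
      (forall U, open U -> forall p, U p -> exists2 o, K o & o p /\ o `<=` U)
    & (forall s o, S s -> K o -> K (s @` o))].

(* D is a real vector space of compactly supported continuous functions
   stable under composition with the elements of S (abstracting D(X)) *)
Definition invariant_fun_space {X : topologicalType} {R : realType}
    (S : set (X -> X)) (D : set (X -> R)) : Prop :=
  [/\ D (fun _ => 0),
      (forall f g, D f -> D g -> D (f \+ g)),
      (forall (c : R) f, D f -> D (fun p => c * f p)),
      (forall f, D f -> continuous f /\
                 exists2 C, compact C & forall p, ~ C p -> f p = 0)
    & (forall s f, S s -> D f -> D (f \o s))].

Definition Dsub {X : topologicalType} {R : realType} (D : set (X -> R))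
    (a : set X) : set (X -> R) :=
  [set g | D g /\ forall p, ~ closure a p -> g p = 0].

Definition cochain {X : topologicalType} {R : realType} (K : set (set X))
    (D : set (X -> R)) (n : nat) (f : simplex X -> (X -> R)) : Prop :=
  forall x, is_simplex K n x -> Dsub D (supp x) (f x).

Definition invariant_cochain {X : topologicalType} {R : realType}
    (S : set (X -> X)) (K : set (set X)) (D : set (X -> R)) (n : nat)
    (f : simplex X -> (X -> R)) : Prop :=
  cochain K D n f /\
  forall s x, S s -> is_simplex K n x -> f (sact s x) \o s = f x.

(* C^n(K,D)^S is nontrivial: contains an element that is not the zero cochain
   (cochains are maps on Sigma_n(K) only) *)
Definition nontrivial_invariant_cochains {X : topologicalType} {R : realType}
    (S : set (X -> X)) (K : set (set X)) (D : set (X -> R)) (n : nat) : Prop :=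
  exists f, invariant_cochain S K D n f /\
    exists2 x, is_simplex K n x & f x <> (fun _ => 0).

(* Main.v *)
Require Import Defs.
From HB Require Import structures.
From mathcomp Require Import all_boot all_order all_algebra.
From mathcomp Require Import all_classical all_reals all_analysis.
Local Open Scope classical_set_scope.
Local Open Scope ring_scope.

Lemma sact_comp {T} (f g : T -> T) (x : simplex T) :
  sact (f \o g) x = sact f (sact g x).
Proof.
move: x; fix IH 1; case=> a l /=; rewrite image_comp; congr Simp.
elim: l => //= z l IHl; by rewrite IH IHl.
Qed.

Lemma sact_id {T} (x : simplex T) : sact id x = x.
Proof.
move: x; fix IH 1; case=> a l /=; rewrite image_id; congr Simp.
elim: l => //= z l IHl; by rewrite IH IHl.
Qed.

Lemma cancel_comp_id {T} {f g : T -> T} : cancel f g -> g \o f = id.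
Proof. by move=> c; apply: funext => x /=; rewrite c. Qed.

Theorem proposition4p10 (R : realType) (X : topologicalType)
    (S : set (X -> X)) (K : set (set X)) (D : set (X -> R)) (n : nat) :
  hausdorff_space X -> homeo_group S -> invariant_base S K ->
  invariant_fun_space S D ->
  nontrivial_invariant_cochains S K D n <->
  exists2 y, is_simplex K n y &
    exists f0, [/\ Dsub D (supp y) f0, f0 <> (fun _ => 0) &
      forall s sinv, S s -> cancel s sinv -> cancel sinv s ->
        sact s y = y -> f0 \o sinv = f0].
Proof.
move=> _ [Sid Scomp Sinv Scont] _ [D0 DD DZ Dc DS]; split.
  move=> [f [[fc finv] [x xs fx0]]]; exists x => //; exists (f x); split => //.
    exact: fc.
  move=> s si Ss c1 c2 sx; rewrite -{1}(finv s x Ss xs) sx -compA.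
  by rewrite (cancel_comp_id c2).
move=> [y ys [f0 [f0D f0n f0st]]].
have WD : forall t ti t' t'i, S t -> S t'i -> cancel t ti -> cancel ti t ->
    cancel t' t'i -> cancel t'i t' -> sact t y = sact t' y ->
    f0 \o ti = f0 \o t'i.
  move=> t ti t' t'i St St'i c1 c2 c3 c4 e.
  have := f0st (t'i \o t) (ti \o t') (Scomp _ _ St'i St).
  move=> /(_ _ _ _)/= H.
  have -> : f0 \o ti = (f0 \o (ti \o t')) \o t'i.
    by apply: funext => p /=; rewrite c4.
  rewrite H //.
  - by move=> p /=; rewrite c4 c1.
  - by move=> p /=; rewrite c2 c3.
  - by rewrite sact_comp e -sact_comp (cancel_comp_id c3) sact_id.
pose P x := exists ti, exists t, [/\ S t, S ti, cancel t ti, cancel ti t & sact t y = x].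
pose f x := if pselect (P x) is left H then f0 \o projT1 (cid H) else (fun _ => 0).
have fE : forall x t ti, S t -> S ti -> cancel t ti -> cancel ti t -> sact t y = x ->
    f x = f0 \o ti.
  move=> x t ti St Sti c1 c2 e; rewrite /f; case: pselect => [H|]; last first.
    by case; exists ti, t.
  case: (cid H) => /= ti' [t' [St' Sti' c1' c2' e']].
  apply: (WD t' ti' t ti) => //; by rewrite e e'.
have fN : forall x, ~ P x -> f x = (fun _ => 0).
  by move=> x nP; rewrite /f; case: pselect.
exists f; split; last first.
  exists y => //; rewrite (fE y id id) //; last exact: sact_id.

split.
  move=> x _; have [[ti [t [St Sti c1 c2 e]]]|nP] := pselect (P x); last first.
    by rewrite fN //; rewrite /Dsub /=; split.
  rewrite (fE x t ti) //; rewrite /Dsub /=; split; first exact: (DS _ _ Sti f0D.1).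
  move=> p np /=; apply: f0D.2 => cl; apply: np; rewrite -e -(c2 p).
  have : closure (supp y) `<=` t @^-1` closure (t @` supp y).
    have cl2 : closed (t @^-1` closure (t @` supp y)).
      by apply: preimage_closed; [move=> z _; exact: Scont | exact: closed_closure].
    move: cl2 => /closure_id ->; apply: closureS => z yz /=.
    by apply: subset_closure; exists z.
  move=> /(_ _ cl) /=.
  by case: (y) => a l.
move=> s x Ss _; have [[ti [t [St Sti c1 c2 e]]]|nP] := pselect (P x).
  have [si Ssi [c3 c4]] := Sinv s Ss.
  rewrite (fE x t ti) // (fE (sact s x) (s \o t) (ti \o si)).
  - by apply: funext => p /=; rewrite c3.
  - exact: Scomp.
  - exact: Scomp.
  - by move=> p /=; rewrite c3 c1.
  - by move=> p /=; rewrite c2 c4.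
  - by rewrite sact_comp e.
rewrite !fN //.
move=> [ti [t [St Sti c1 c2 e]]]; apply: nP.
have [si Ssi [c3 c4]] := Sinv s Ss.
exists (ti \o s), (si \o t); split.
- exact: Scomp.
- exact: Scomp.
- by move=> p /=; rewrite c4 c1.
- by move=> p /=; rewrite c2 c3.
- by rewrite sact_comp e -sact_comp (cancel_comp_id c3) sact_id.
Qed.
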